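(* Let $H$ be a graph labeled by $\mathrm{HL}$-types and let $p\in Pr$ be a primitive type such that $p$ is lonely in $\times(H)$ and $\times(H)$ has no skeleton subtypes. Then $\mathrm{HL}\not\vdash H\to p$.
   Context: Hypergraphs: given labels $C$ with $type:C\to\mathbb{N}$, a graph is $G=\langle V,E,att,lab,ext\rangle$ with finite $V,E$, $att:E\to V^\circledast$ (strings of distinct nodes), $lab:E\to C$ with $type(lab(e))=|att(e)|$, $ext\in V^\circledast$; $type(G)=|ext|$; isomorphic graphs identified. Handle $a^\bullet$: one edge labeled $a$ attached to $v_1\dots v_n$, all external in that order. Replacement $G[e/H]$: remove $e$, insert a disjoint copy of $H$, fuse $i$-th external node of $H$ with $i$-th attachment node of $e$; simultaneous replacement; relabeling $G[e:=a]$. $\mathrm{HL}$: primitive types $Pr$ with $type:Pr\to\mathbb{N}$ (infinitely many of each arity); symbol $\$$ of any arity. Types: primitives; $N\div D$ where $D$ has exactly one edge $d_0$ labeled $\$$, others labeled by types, $type(N)=type(D)$, $type(N\div D)=type_D(d_0)$; $\times(M)$ for a type-labeled graph $M$, $type(\times(M))=type(M)$. Subtypes of a type are the occurrences of types in its inductive construction (the type itself, and recursively the subtypes of $N$ and of the edge labels of $D$ for $N\div D$, and of the edge labels of $M$ for $\times(M)$). Graph sequent $H\to A$ with $type(H)=type(A)$. Axioms $p^\bullet\to p$. Rules: $(\div\to)$: for $N\div D$ with $E_D=\{d_0,\dots,d_k\}$, $e\in E_H$ labeled $N$: from $H\to A$, $H_i\to lab(d_i)$ infer $H[e/D][d_0:=N\div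 D][d_1/H_1,\dots,d_k/H_k]\to A$; $(\to\div)$: from $D[d_0/F]\to N$ infer $F\to N\div D$; $(\times\to)$: if $e\in E_G$ is labeled $\times(F)$, from $G[e/F]\to A$ infer $G\to A$; $(\to\times)$: with $E_M=\{m_1,\dots,m_l\}$, from $H_i\to lab(m_i)$ infer $M[m_1/H_1,\dots,m_l/H_l]\to\times(M)$. Top occurrence: a distinguished subtype occurrence $B$ is a top occurrence within $A$ if $A=B$; or $A=\times(M)$ and $B$ is a top occurrence within $lab(e_0)$ for some $e_0\in E_M$; or $A=N\div D$ and $B$ is a top occurrence within $N$. A primitive type $p$ is lonely in a type $A$ if for each top occurrence of $p$ within $A$ there is a subtype $\times(M)$ of $A$ with $|E_M|\ge 2$ and some $e_0\in E_M$ whose label $lab(e_0)=p$ is that top occurrence. A type $A$ is skeleton if $A=\times(M)$ with $E_M=\emptyset$ and $|ext_M|=|V_M|$. *)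

(* Defs.v *)
From mathcomp Require Import all_boot.
From Stdlib Require List.

Set Implicit Arguments.
Unset Strict Implicit.
Unset Printing Implicit Defensive.

(* Hypergraphs.  A graph has a finite list of (distinct) nodes [gV], a list  *)
(* of edges [gE] (edge i = i-th entry, a pair (label, attachment string)),   *)
(* and a string of external nodes [gext].  Graphs are identified up to       *)
(* isomorphism via [iso_data] / [giso] below.                                *)
Record hgraph (L : Type) := HGraph {
  gV : seq nat;
  gE : seq (L * seq nat);
  gext : seq nat }.
Arguments HGraph {L}.

(* HL types.
   - [Prim n i] : the i-th primitive type of arity n (infinitely many per arity).
   - [Div N d0 D] : N ÷ D, where the graph D has the distinguished $-edge d0
     with attachment string [d0], plus the type-labelled edges [gE D];
     nodes [gV D] and external nodes [gext D].
   - [Prod M] : ×(M). *)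
Inductive typ : Type :=
| Prim (n i : nat)
| Div (N : typ) (d0 : seq nat) (D : hgraph typ)
| Prod (M : hgraph typ).

Definition tarity (A : typ) : nat :=
  match A with
  | Prim n _ => n
  | Div _ d0 _ => size d0
  | Prod M => size (gext M)
  end.

Definition dflt_edge : typ * seq nat := (Prim 0 0, [::]).
Definition lab (G : hgraph typ) (i : nat) : typ := (nth dflt_edge (gE G) i).1.
Definition att (G : hgraph typ) (i : nat) : seq nat := (nth dflt_edge (gE G) i).2.

Inductive wf_typ : typ -> Prop :=
| wf_prim n i : wf_typ (Prim n i)
| wf_div N d0 D :
    wf_typ N ->
    uniq (gV D) -> uniq (gext D) -> {subset gext D <= gV D} ->
    uniq d0 -> {subset d0 <= gV D} ->
    (forall e, List.In e (gE D) ->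
       [/\ uniq e.2, {subset e.2 <= gV D} & tarity e.1 = size e.2]) ->
    (forall e, List.In e (gE D) -> wf_typ e.1) ->
    tarity N = size (gext D) ->
    wf_typ (Div N d0 D)
| wf_prod M :
    uniq (gV M) -> uniq (gext M) -> {subset gext M <= gV M} ->
    (forall e, List.In e (gE M) ->
       [/\ uniq e.2, {subset e.2 <= gV M} & tarity e.1 = size e.2]) ->
    (forall e, List.In e (gE M) -> wf_typ e.1) ->
    wf_typ (Prod M).

Definition wf_graph (G : hgraph typ) : Prop :=
  [/\ uniq (gV G), uniq (gext G), {subset gext G <= gV G},
      (forall e, List.In e (gE G) ->
         [/\ uniq e.2, {subset e.2 <= gV G} & tarity e.1 = size e.2])
    & (forall e, List.In e (gE G) -> wf_typ e.1)].

Definition wf_seq (G : hgraph typ) (A : typ) : Prop :=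
  [/\ wf_graph G, wf_typ A & size (gext G) = tarity A].

(* Isomorphism data (without labels): node bijection f, edge bijection s
   (edge i of G corresponds to edge (nth 0 s i) of G'). *)
Definition iso_data (f : nat -> nat) (s : seq nat) (G G' : hgraph typ) : Prop :=
  [/\ [/\ {in gV G &, injective f},
          perm_eq (map f (gV G)) (gV G')
        & map f (gext G) = gext G'],
      perm_eq s (iota 0 (size (gE G'))),
      size s = size (gE G)
    & forall i, i < size (gE G) -> att G' (nth 0 s i) = map f (att G i)].

Inductive teq : typ -> typ -> Prop :=
| teq_prim n i : teq (Prim n i) (Prim n i)
| teq_div N N' d0 d0' D D' f s :
    teq N N' -> iso_data f s D D' -> map f d0 = d0' ->
    (forall i, i < size (gE D) -> teq (lab D i) (lab D' (nth 0 s i))) ->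
    teq (Div N d0 D) (Div N' d0' D')
| teq_prod M M' f s :
    iso_data f s M M' ->
    (forall i, i < size (gE M) -> teq (lab M i) (lab M' (nth 0 s i))) ->
    teq (Prod M) (Prod M').

Definition giso (G G' : hgraph typ) : Prop :=
  exists f s, iso_data f s G G' /\
    forall i, i < size (gE G) -> teq (lab G i) (lab G' (nth 0 s i)).

Definition handle (a : typ) : hgraph typ :=
  HGraph (iota 0 (tarity a)) [:: (a, iota 0 (tarity a))] (iota 0 (tarity a)).

(* Simultaneous replacement G[e_1/H_1, ..., e_k/H_k]:
   [Hs] gives, for each edge index i of G, [Some H] (replace edge i by H) or
   [None] (keep edge i).  Internal nodes of the H replacing edge i are renamed
   apart by v |-> (i+1)*B + v; the j-th external node of H is fused with the
   j-th attachment node of edge i.  The edges replacing edge i are placed, in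
   order, at the position of edge i. *)
Definition repl_bound (G : hgraph typ) (Hs : seq (option (hgraph typ))) : nat :=
  (foldr maxn 0 (gV G ++ gext G ++ flatten [seq match o with
                                   | Some H => gV H ++ gext H ++ flatten (map snd (gE H))
                                   | None => [::] end | o <- Hs]
                 ++ flatten (map snd (gE G)))).+1.

Definition repl_node (B i : nat) (a : seq nat) (H : hgraph typ) (v : nat) : nat :=
  if v \in gext H then nth 0 a (index v (gext H)) else i.+1 * B + v.

Definition repl (G : hgraph typ) (Hs : seq (option (hgraph typ))) : hgraph typ :=
  let B := repl_bound G Hs in
  HGraph
    (gV G ++ flatten [seq match nth None Hs i with
                          | Some H => [seq i.+1 * B + v | v <- gV H & v \notin gext H]
                          | None => [::] end
                     | i <- iota 0 (size (gE G))])
    (flatten [seq match nth None Hs i with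
                  | Some H => [seq (e.1, map (repl_node B i (att G i) H) e.2) | e <- gE H]
                  | None => [:: nth dflt_edge (gE G) i] end
             | i <- iota 0 (size (gE G))])
    (gext G).

Definition repl1 (G : hgraph typ) (e : nat) (H : hgraph typ) : hgraph typ :=
  repl G (nseq e None ++ [:: Some H]).

(* The graph D of N ÷ D with its $-edge d0 (edge index 0) labelled by X. *)
Definition dgraph (X : typ) (d0 : seq nat) (D : hgraph typ) : hgraph typ :=
  HGraph (gV D) ((X, d0) :: gE D) (gext D).

Inductive derivable : hgraph typ -> typ -> Prop :=
| d_ax n i :
    derivable (handle (Prim n i)) (Prim n i)
| d_iso H A H' A' :
    derivable H A -> giso H H' -> teq A A' -> wf_seq H' A' ->
    derivable H' A'
| d_divL N d0 D H A e Hs :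
    (* (÷ →): E_D = {d0, d_1..d_k}; d0 is edge 0 of [dgraph], d_j is edge j-1 of D *)
    wf_typ (Div N d0 D) ->
    e < size (gE H) -> lab H e = N ->
    size Hs = size (gE D) ->
    derivable H A ->
    (forall j, j < size (gE D) -> derivable (nth (handle (Prim 0 0)) Hs j) (lab D j)) ->
    wf_seq (repl (repl1 H e (dgraph (Div N d0 D) d0 D))
                 (nseq e.+1 None ++ map Some Hs)) A ->
    derivable (repl (repl1 H e (dgraph (Div N d0 D) d0 D))
                    (nseq e.+1 None ++ map Some Hs)) A
| d_divR N d0 D F :
    derivable (repl1 (dgraph (Prim 0 0) d0 D) 0 F) N ->
    wf_seq F (Div N d0 D) ->
    derivable F (Div N d0 D)
| d_prodL G e F A :
    e < size (gE G) -> lab G e = Prod F ->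
    derivable (repl1 G e F) A ->
    wf_seq G A ->
    derivable G A
| d_prodR M Hs :
    size Hs = size (gE M) ->
    (forall j, j < size (gE M) -> derivable (nth (handle (Prim 0 0)) Hs j) (lab M j)) ->
    wf_seq (repl M (map Some Hs)) (Prod M) ->
    derivable (repl M (map Some Hs)) (Prod M).

(* Subtype occurrences, addressed by paths from the root.
   Children of N ÷ D: 0 = N, j+1 = label of edge j of D (the non-$ edges);
   children of ×(M): j = label of edge j of M. *)
Fixpoint subt (A : typ) (p : seq nat) : option typ :=
  match p with
  | [::] => Some A
  | j :: p' =>
      match A with
      | Prim _ _ => None
      | Div N _ D =>
          match j with
          | 0 => subt N p'
          | j'.+1 => match List.nth_error (gE D) j' with
                     | Some e => subt e.1 p'
                     | None => None end
          end
      | Prod M => match List.nth_error (gE M) j with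
                  | Some e => subt e.1 p'
                  | None => None end
      end
  end.

Fixpoint is_top (A : typ) (p : seq nat) : Prop :=
  match p with
  | [::] => True
  | j :: p' =>
      match A with
      | Prim _ _ => False
      | Div N _ _ => j = 0 /\ is_top N p'
      | Prod M => match List.nth_error (gE M) j with
                  | Some e => is_top e.1 p'
                  | None => False end
      end
  end.

Definition lonely (p A : typ) : Prop :=
  forall q, is_top A q -> subt A q = Some p ->
    exists q' j M, q = q' ++ [:: j] /\ subt A q' = Some (Prod M) /\
                   2 <= size (gE M) /\ j < size (gE M).

Definition skeleton (A : typ) : Prop :=
  exists M, A = Prod M /\ gE M = [::] /\ size (gext M) = size (gV M).

Definition no_skeleton_subtypes (A : typ) : Prop :=
  forall q B, subt A q = Some B -> ~ skeleton B.

(* Main.v *)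
Require Import Defs.
From mathcomp Require Import all_boot zify.
From Stdlib Require List.
Set Implicit Arguments.
Unset Strict Implicit.

Lemma InP (T : eqType) (x : T) (s : seq T) : List.In x s <-> x \in s.
Proof.
elim: s => [|y s IH] //=; rewrite in_cons; split.
- by case=> [->|/IH ->]; rewrite ?eqxx ?orbT.
- by case/orP=> [/eqP ->|/IH]; [left|right].
Qed.

Lemma In_map (A B : Type) (f : A -> B) (s : seq A) y :
  List.In y (map f s) <-> exists x, List.In x s /\ f x = y.
Proof.
elim: s => [|x s IH] /=; first by split=> // [[x []]].
split.
- case=> [Hx|Hy]; first by exists x; auto.
  have [z [Hz Hz']] := proj1 IH Hy; by exists z; auto.
- case=> z [[<-|Hz] Hz']; first by left.
  right; apply (proj2 IH); by exists z.
Qed.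

Lemma In_flatten (T : Type) (x : T) (l : seq (seq T)) :
  List.In x (flatten l) <-> exists y, List.In y l /\ List.In x y.
Proof.
elim: l => [|y l IH] /=; first by split=> // [[y []]].
rewrite List.in_app_iff; split.
- case=> [Hx|Hy]; first by exists y; auto.
  have [z [Hz Hz']] := proj1 IH Hy; by exists z; auto.
- case=> z [[<-|Hz] Hx]; first by left.
  right; apply (proj2 IH); by exists z.
Qed.

Lemma nth_err (T : Type) (s : seq T) k x0 :
  k < size s -> List.nth_error s k = Some (nth x0 s k).
Proof. by elim: s k => [|y s IH] [|k] //= /IH. Qed.

Lemma nth_err_inv (T : Type) (s : seq T) k x x0 :
  List.nth_error s k = Some x -> k < size s /\ nth x0 s k = x.
Proof. elim: s k => [|y s IH] [|k] //=; first by case=> ->. by move/IH. Qed.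

Lemma In_nth (T : Type) (s : seq T) k x0 : k < size s -> List.In (nth x0 s k) s.
Proof. elim: s k => [|y s IH] [|k] //=; [by left | by move/IH; right]. Qed.

Lemma In_nth_inv (T : Type) (s : seq T) x x0 :
  List.In x s -> exists k, k < size s /\ nth x0 s k = x.
Proof.
elim: s => [|y s IH] //= [<-|/IH [k [Hk <-]]]; first by exists 0.
by exists k.+1.
Qed.

Definition labs (G : hgraph typ) : seq typ := map fst (gE G).

Lemma lab_nth G k : lab G k = nth (Prim 0 0) (labs G) k.
Proof. rewrite /lab /labs; elim: (gE G) k => [|x s IH] [|k] //=; by rewrite nth_nil. Qed.

Lemma size_labs G : size (labs G) = size (gE G).
Proof. by rewrite /labs size_map. Qed.

Lemma In_labs G k : k < size (gE G) -> List.In (lab G k) (labs G).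
Proof. by move=> Hk; rewrite lab_nth; apply: In_nth; rewrite size_labs. Qed.

Lemma In_labs_inv G L : List.In L (labs G) -> exists k, k < size (gE G) /\ lab G k = L.
Proof.
move=> /(In_nth_inv (Prim 0 0)) [k [Hk <-]]; exists k; rewrite -size_labs lab_nth; done.
Qed.

Lemma flatten_single (A B : Type) (f : A -> B) s : flatten [seq [:: f i] | i <- s] = map f s.
Proof. by elim: s => //= x s ->. Qed.

Lemma labs_repl G Hs : labs (repl G Hs) =
  flatten [seq (match nth None Hs i with Some X => labs X | None => [:: lab G i] end)
          | i <- iota 0 (size (gE G))].
Proof.
rewrite /labs /repl /= map_flatten -map_comp; congr flatten; apply: eq_map => i /=.
by case: nth => [X|] //=; rewrite -map_comp.
Qed.

Lemma labs_repl1 G e X : e < size (gE G) -> labs (repl1 G e X) =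
  map (lab G) (iota 0 e) ++ labs X ++ map (lab G) (iota e.+1 (size (gE G) - e.+1)).
Proof.
move=> He; rewrite /repl1 labs_repl.
rewrite {1}(_ : size (gE G) = e + (1 + (size (gE G) - e.+1))); last by lia.
rewrite iotaD iotaD !map_cat !flatten_cat add0n.
set F := fun i => match nth None (nseq e None ++ [:: Some X]) i with Some X0 => labs X0 | None => [:: lab G i] end.
have E1 : map F (iota 0 e) = map (fun i => [:: lab G i]) (iota 0 e).
  apply/eq_in_map => i; rewrite mem_iota => /andP [_ Hi].
  by rewrite /F nth_cat size_nseq Hi nth_nseq Hi.
have E2 : map F (iota (e + 1) (size (gE G) - e.+1)) =
          map (fun i => [:: lab G i]) (iota (e + 1) (size (gE G) - e.+1)).
  apply/eq_in_map => i; rewrite mem_iota => /andP [Hi _].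
  rewrite /F nth_default // size_cat size_nseq /=; lia.
rewrite E1 E2 !flatten_single addn1 /= /F nth_cat size_nseq ltnn subnn /= cats0 //.
Qed.

Lemma repl_kept G Hs k : k < size (gE G) -> nth None Hs k = None ->
  List.In (lab G k) (labs (repl G Hs)).
Proof.
move=> Hk HN; rewrite labs_repl; apply/In_flatten; exists [:: lab G k]; split; last by left.
apply/In_map; exists k; rewrite HN; split=> //; apply/InP; rewrite mem_iota; lia.
Qed.

Lemma In_gE_repl G Hs x : List.In x (gE (repl G Hs)) ->
  List.In x (gE G) \/ exists i X y, nth None Hs i = Some X /\ List.In y (gE X).
Proof.
rewrite /repl /= => /In_flatten [b [/In_map [i [Hi <-]] Hx]].
case E: (nth None Hs i) Hx => [X|] Hx.
  right; move/In_map: Hx => [y [Hy _]]; by exists i, X, y.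
left; case: Hx => // <-; apply: In_nth; move/InP: Hi; rewrite mem_iota; lia.
Qed.

Lemma foldr_maxn_ge v s : v \in s -> v <= foldr maxn 0 s.
Proof.
elim: s => //= x s IH; rewrite in_cons => /orP [/eqP ->|/IH H]; first by apply: leq_maxl.
by apply: (leq_trans H); apply: leq_maxr.
Qed.

Lemma in_flatten_In (l : seq (seq nat)) y v : List.In y l -> v \in y -> v \in flatten l.
Proof.
elim: l => //= z l IH [<-|Hy] Hv; rewrite mem_cat ?Hv //.
by rewrite IH ?orbT.
Qed.

Lemma att_bound G Hs ed v : List.In ed (gE G) -> v \in ed.2 -> v < repl_bound G Hs.
Proof.
move=> Hed Hv; rewrite /repl_bound ltnS; apply: foldr_maxn_ge.
rewrite !mem_cat; apply/orP; right; apply/orP; right; apply/orP; right.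
apply: (@in_flatten_In _ _ _ _ Hv); apply/In_map; by exists ed.
Qed.

Definition HasSkel (L : typ) := exists q B, subt L q = Some B /\ skeleton B.
Definition BadOcc n i (L : typ) := exists q0 j,
  [/\ is_top L (q0 ++ [:: j]), subt L (q0 ++ [:: j]) = Some (Prim n i) &
     forall M, subt L q0 = Some (Prod M) -> ~ (2 <= size (gE M) /\ j < size (gE M))].

Lemma teq_primE n i A : teq (Prim n i) A -> A = Prim n i.
Proof. by move=> H; inversion H. Qed.
Lemma teq_primE' n i A : teq A (Prim n i) -> A = Prim n i.
Proof. by move=> H; inversion H. Qed.

Lemma teq_divE N d0 D L' : teq (Div N d0 D) L' -> exists N' d0' D' f s,
  [/\ L' = Div N' d0' D', teq N N', iso_data f s D D' &
      forall i, i < size (gE D) -> teq (lab D i) (lab D' (nth 0 s i))].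
Proof. move=> H; inversion H; subst; by exists N', (map f d0), D', f, s. Qed.

Lemma teq_prodE M L' : teq (Prod M) L' -> exists M' f s,
  [/\ L' = Prod M', iso_data f s M M' &
      forall i, i < size (gE M) -> teq (lab M i) (lab M' (nth 0 s i))].
Proof. move=> H; inversion H; subst; by exists M', f, s. Qed.

Lemma iso_size f s M M' : iso_data f s M M' ->
  size (gE M') = size (gE M) /\ forall k, k < size (gE M) -> nth 0 s k < size (gE M').
Proof.
case=> _ Hp Hs _; have Hsz := perm_size Hp; rewrite size_iota in Hsz.
split; first by rewrite -Hsz.
move=> k Hk; have : nth 0 s k \in iota 0 (size (gE M')).
  by rewrite -(perm_mem Hp) mem_nth // Hs.
by rewrite mem_iota.
Qed.

Lemma nth_err_lab G k : k < size (gE G) ->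
  List.nth_error (gE G) k = Some (nth dflt_edge (gE G) k).
Proof. exact: nth_err. Qed.

Lemma skel_teq q : forall L L' B, teq L L' -> subt L q = Some B -> skeleton B -> HasSkel L'.
Proof.
elim: q => [|j q IH] L L' B Ht /=.
  case=> HLB; subst B; case=> [M [HLM [HE HV]]]; subst L.
  have [M' [f [s [-> Hiso _]]]] := teq_prodE Ht.
  exists [::], (Prod M'); split => //; exists M'; split => //.
  have [Hsz _] := iso_size Hiso; case: Hiso => [[_ Hp Hx] _ _ _].
  split; first by apply/size0nil; rewrite Hsz HE.
  by rewrite -Hx -(perm_size Hp) !size_map.
case: L Ht => [n i|N d0 D|M] Ht //.
- have [N' [d0' [D' [f [s [-> HN Hiso HD]]]]]] := teq_divE Ht.
  case: j => [|j].
    move=> Hs Hsk; have [q' [B' [Hq' HB']]] := IH _ _ _ HN Hs Hsk.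
    by exists (0 :: q'), B'.
  case E: (List.nth_error (gE D) j) => [e|] // Hs Hsk.
  have [Hj He] := nth_err_inv dflt_edge E.
  have Ht' := HD j Hj; rewrite /lab He in Ht'.
  have [q' [B' [Hq' HB']]] := IH _ _ _ Ht' Hs Hsk.
  have [_ Hk] := iso_size Hiso.
  exists ((nth 0 s j).+1 :: q'), B'; split => //=.
  by rewrite nth_err_lab ?Hk.
- have [M' [f [s [-> Hiso HD]]]] := teq_prodE Ht.
  case E: (List.nth_error (gE M) j) => [e|] // Hs Hsk.
  have [Hj He] := nth_err_inv dflt_edge E.
  have Ht' := HD j Hj; rewrite /lab He in Ht'.
  have [q' [B' [Hq' HB']]] := IH _ _ _ Ht' Hs Hsk.
  have [_ Hk] := iso_size Hiso.
  exists ((nth 0 s j) :: q'), B'; split => //=.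
  by rewrite nth_err_lab ?Hk.
Qed.

Lemma badocc_teq n i q0 : forall L L' j, teq L L' -> is_top L (q0 ++ [:: j]) ->
  subt L (q0 ++ [:: j]) = Some (Prim n i) ->
  (forall M, subt L q0 = Some (Prod M) -> ~ (2 <= size (gE M) /\ j < size (gE M))) ->
  BadOcc n i L'.
Proof.
elim: q0 => [|k q0 IH] L L' j Ht /=.
  case: L Ht => [n' i'|N d0 D|M] Ht //.
  - have [N' [d0' [D' [f [s [-> HN Hiso HD]]]]]] := teq_divE Ht.
    case=> -> _; case=> HNp _; rewrite HNp in HN; have -> := teq_primE HN.
    by exists [::], 0; split => //.
  - have [M' [f [s [-> Hiso HD]]]] := teq_prodE Ht.
    case E: (List.nth_error (gE M) j) => [e|] // _ [He1] Hpar.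
    have [Hj He] := nth_err_inv dflt_edge E.
    have Ht' := HD j Hj; rewrite /lab He He1 in Ht'; have Hl := teq_primE Ht'.
    have [Hsz Hk] := iso_size Hiso.
    exists [::], (nth 0 s j); split => /=.
    + by rewrite nth_err_lab ?Hk.
    + by rewrite nth_err_lab ?Hk //= -Hl.
    + move=> M0 [<-]; rewrite Hsz => -[H2 _]; apply: (Hpar M) => //; by split.
case: L Ht => [n' i'|N d0 D|M] Ht //.
- have [N' [d0' [D' [f [s [-> HN Hiso HD]]]]]] := teq_divE Ht.
  case=> -> Htop Hs Hpar.
  have [q' [j' [H1 H2 H3]]] := IH _ _ _ HN Htop Hs Hpar.
  by exists (0 :: q'), j'; split.
- have [M' [f [s [-> Hiso HD]]]] := teq_prodE Ht.
  case E: (List.nth_error (gE M) k) => [e|] // Htop Hs Hpar.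
  have [Hj He] := nth_err_inv dflt_edge E.
  have Ht' := HD k Hj; rewrite /lab He in Ht'.
  have [q' [j' [H1 H2 H3]]] := IH _ _ _ Ht' Htop Hs Hpar.
  have [_ Hk] := iso_size Hiso.
  exists ((nth 0 s k) :: q'), j'; split => /=; rewrite ?nth_err_lab ?Hk //.
Qed.

Definition Bad n i (G : hgraph typ) :=
  (exists L, List.In L (labs G) /\ (HasSkel L \/ BadOcc n i L)) \/
  [/\ size (gE G) = 1, lab G 0 = Prim n i & {subset gV G <= att G 0}].

Lemma good_teq n i L L' : teq L L' -> HasSkel L \/ BadOcc n i L -> HasSkel L' \/ BadOcc n i L'.
Proof.
move=> Ht [[q [B [Hq HB]]]|[q0 [j [H1 H2 H3]]]].
  by left; apply: (skel_teq Ht Hq HB).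
by right; apply: (badocc_teq Ht H1 H2 H3).
Qed.

Lemma good_div n i N d0 D : HasSkel N \/ BadOcc n i N -> HasSkel (Div N d0 D) \/ BadOcc n i (Div N d0 D).
Proof.
case=> [[q [B [Hq HB]]]|[q0 [j [H1 H2 H3]]]].
  by left; exists (0 :: q), B.
by right; exists (0 :: q0), j; split.
Qed.

Lemma good_prod n i F L : List.In L (labs F) -> HasSkel L \/ BadOcc n i L ->
  HasSkel (Prod F) \/ BadOcc n i (Prod F).
Proof.
move=> /In_labs_inv [k [Hk <-]].
case=> [[q [B [Hq HB]]]|[q0 [j [H1 H2 H3]]]].
  by left; exists (k :: q), B; rewrite /= nth_err_lab.
by right; exists (k :: q0), j; split; rewrite /= nth_err_lab.
Qed.

Lemma nth_None_pre (T : Type) m (Hs : seq (option T)) k : k < m -> nth None (nseq m None ++ Hs) k = None.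
Proof. by elim: m k => [|m IH] [|k] //= /IH. Qed.

Lemma divL_labs H e Y rest X Hs2 :
  e < size (gE H) -> labs X = Y :: rest -> size Hs2 = size rest ->
  List.In Y (labs (repl (repl1 H e X) (nseq e.+1 None ++ Hs2))) /\
  forall k, k < size (gE H) -> k != e ->
    List.In (lab H k) (labs (repl (repl1 H e X) (nseq e.+1 None ++ Hs2))).
Proof.
move=> He HX HS.
have HL := labs_repl1 X He; rewrite HX in HL.
set G1 := repl1 H e X in HL *.
set A := map (lab H) (iota 0 e) in HL.
set C := map (lab H) (iota e.+1 (size (gE H) - e.+1)) in HL.
have HsA : size A = e by rewrite /A size_map size_iota.
have HsC : size C = size (gE H) - e.+1 by rewrite /C size_map size_iota.
have HsG1 : size (gE G1) = e + (1 + size rest) + (size (gE H) - e.+1).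
  by rewrite -size_labs HL !size_cat /= HsA HsC; lia.
split.
  have := @repl_kept G1 (nseq e.+1 None ++ Hs2) e.
  rewrite lab_nth HL (nth_cat (Prim 0 0) A) HsA ltnn subnn /=; apply; first by rewrite HsG1; lia.
  by apply: (@nth_None_pre _ e.+1).
move=> k Hk Hke.
case: (ltngtP k e) => [Hlt|Hgt|Heq]; last by rewrite Heq eqxx in Hke.
  have := @repl_kept G1 (nseq e.+1 None ++ Hs2) k.
  rewrite lab_nth HL (nth_cat (Prim 0 0) A) HsA Hlt /A (nth_map 0) ?size_iota // nth_iota //.
  apply; first by rewrite HsG1; lia.
  by apply: (@nth_None_pre _ e.+1); lia.
have := @repl_kept G1 (nseq e.+1 None ++ Hs2) (k + size rest).
rewrite lab_nth HL (nth_cat (Prim 0 0) A) HsA (_ : k + size rest < e = false) /=; last by lia.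
have -> : k + size rest - e = (k - e.+1 + size rest).+1 by lia.
rewrite /= (nth_cat (Prim 0 0) rest) (_ : k - e.+1 + size rest < size rest = false) ?addnK; last by lia.
rewrite /C (nth_map 0) ?size_iota; last by lia.
rewrite nth_iota; last by lia.
rewrite (_ : e.+1 + (k - e.+1) = k); last by lia.
apply; first by rewrite HsG1; lia.
by rewrite nth_default //= size_cat size_nseq HS; lia.
Qed.

Lemma nth_repl1_Some e (F : hgraph typ) i X : nth None (nseq e None ++ [:: Some F]) i = Some X -> X = F.
Proof.
elim: e i => [|e IH] [|i] /=; [by case | by rewrite nth_nil | by [] | exact: IH].
Qed.

Lemma prodL_nodes G e F v : e < size (gE G) -> v \in gV F -> v \notin gext F ->
  e.+1 * repl_bound G (nseq e None ++ [:: Some F]) + v \in gV (repl1 G e F).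
Proof.
move=> He Hv Hn; rewrite /repl1 /repl /= mem_cat; apply/orP; right.
apply/flatten_mapP; exists e; first by rewrite mem_iota.
rewrite nth_cat size_nseq ltnn subnn /=.
by apply: map_f; rewrite mem_filter Hn Hv.
Qed.

Lemma main n i G A : derivable G A -> A = Prim n i -> Bad n i G.
Proof.
elim=> {G A}.
- move=> n' i' [-> ->]; right; split => //.
- move=> H A H' A' _ IH [f [s [Hiso Hl]]] Ht _ HA; subst A'.
  have HA := teq_primE' Ht; have [Hsz Hk] := iso_size Hiso.
  case: (IH HA) => [[L [HL Hg]]|[H1 H2 H3]].
    have [k [Hk' HLk]] := In_labs_inv HL; subst L.
    left; exists (lab H' (nth 0 s k)); split; first by apply: In_labs; exact: Hk.
    exact: good_teq (Hl k Hk') Hg.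
  have Hs0 : nth 0 s 0 = 0.
    have h0 : nth 0 s 0 < size (gE H') by apply: Hk; rewrite H1.
    rewrite Hsz H1 in h0; lia.
  right; split; first by rewrite Hsz.
    have h1 : 0 < size (gE H) by rewrite H1.
    by have := Hl 0 h1; rewrite Hs0 H2 => /teq_primE ->.
  move=> v; case: Hiso => [[_ Hp _] _ _ Hatt].
  rewrite -(perm_mem Hp) => /mapP [u Hu ->].
  rewrite -Hs0 Hatt ?H1 //; apply: map_f; exact: H3.
- move=> N d0 D H A e Hs _ He Hlab HsD _ IH _ _ _ HA.
  have HsD' : size (map Some Hs) = size (labs D) by rewrite size_map size_labs.
  have [K1 K2] := @divL_labs H e (Div N d0 D) (labs D) (dgraph (Div N d0 D) d0 D)
                   (map Some Hs) He erefl HsD'.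
  case: (IH HA) => [[L [HL Hg]]|[H1 H2 H3]].
    have [k [Hk HLk]] := In_labs_inv HL; subst L.
    case: (eqVneq k e) => [Hke|Hne].
      subst k; left; exists (Div N d0 D); split => //; apply: good_div; by rewrite -Hlab.
    by left; exists (lab H k); split => //; apply: K2.
  have He0 : e = 0 by lia.
  left; exists (Div N d0 D); split => //; right; exists [::], 0; split => //=.
  by rewrite -Hlab He0 H2.
- by move=> N d0 D F _ _ _ HA.
- move=> G e F A He Hlab _ IH Hwf HA.
  have HL := labs_repl1 F He.
  have HFin : List.In (Prod F) (labs G) by rewrite -Hlab; apply: In_labs.
  case: (IH HA) => [[L [HLin Hg]]|[H1 H2 H3]].
    rewrite HL in HLin; case/List.in_app_iff: HLin => [HA'|/List.in_app_iff [HF|HC]].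
    + move/In_map: HA' => [k [/InP Hk HLk]]; subst L; rewrite mem_iota in Hk.
      left; exists (lab G k); split => //; apply: In_labs; lia.
    + left; exists (Prod F); split => //; exact: good_prod HF Hg.
    + move/In_map: HC => [k [/InP Hk HLk]]; subst L; rewrite mem_iota in Hk.
      left; exists (lab G k); split => //; apply: In_labs; lia.
  have hsz : e + size (gE F) + (size (gE G) - e.+1) = 1.
    by rewrite -H1 -(size_labs (repl1 G e F)) HL !size_cat !size_map !size_iota ?size_labs /=; lia.
  case EF: (gE F) hsz => [|x [|y r]] hsz; last by rewrite /= in hsz; lia.
  +
    have Hw' : wf_typ (Prod F).
      case: Hwf => [[_ _ _ _ Hw] _ _].
      have := Hw (nth dflt_edge (gE G) e) (In_nth _ He).
      by rewrite -/(lab G e) Hlab.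
    inversion Hw' as [| |M Huv Hux Hsub _ _]; subst.
    have Hall : forall v, v \in gV F -> v \in gext F.
      move=> v Hv; apply/negPn/negP => Hn.
      have Hw := prodL_nodes He Hv Hn; have Hat := H3 _ Hw.
      have Hin : List.In (nth dflt_edge (gE (repl1 G e F)) 0) (gE (repl1 G e F)).
        by apply: In_nth; rewrite H1.
      case: (In_gE_repl Hin) => [HinG|[i' [X [y [HX Hy]]]]].
        have := att_bound (nseq e None ++ [:: Some F]) HinG Hat.
        set B := repl_bound _ _.
        have : B <= e.+1 * B + v by rewrite mulSn -addnA leq_addr.
        lia.
      by rewrite (nth_repl1_Some HX) EF in Hy.
    have Hperm : perm_eq (gext F) (gV F).
      apply: uniq_perm => // v; apply/idP/idP; [exact: Hsub | exact: Hall].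
    left; exists (Prod F); split => //; left; exists [::], (Prod F); split => //.
    exists F; split => //; split => //; exact: perm_size Hperm.
  + have He0 : e = 0 by rewrite /= in hsz; lia.
    subst e.
    have HF0 : lab F 0 = Prim n i.
      by rewrite -H2 (lab_nth (repl1 G 0 F)) HL /= lab_nth /labs EF.
    left; exists (Prod F); split => //; right; exists [::], 0; split => /=; rewrite ?EF //=.
    * by rewrite /lab EF /= in HF0; rewrite HF0.
    * by move=> M [<-]; rewrite EF; case.
- by move=> M Hs _ _ _ _ HA.
Qed.

Theorem lemma1 (H : hgraph typ) (n i : nat) :
  wf_graph H ->
  lonely (Prim n i) (Prod H) ->
  no_skeleton_subtypes (Prod H) ->
  ~ derivable H (Prim n i).
Proof.
move=> _ Hlon Hns Hd.
case: (main Hd erefl) => [[L [HL [[q [B [Hq HB]]]|[q0 [j [Ht Hsb Hpar]]]]]]|[H1 H2 H3]].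
- have [k [Hk HLk]] := In_labs_inv HL; subst L.
  apply: (Hns (k :: q) B) => //=; by rewrite nth_err_lab.
- have [k [Hk HLk]] := In_labs_inv HL; subst L.
  have Htop : is_top (Prod H) (k :: q0 ++ [:: j]) by rewrite /= nth_err_lab.
  have Hsub : subt (Prod H) (k :: q0 ++ [:: j]) = Some (Prim n i) by rewrite /= nth_err_lab.
  have [q' [j' [M [Heq [HM [H2 Hj]]]]]] := Hlon _ Htop Hsub.
  rewrite cats1 -rcons_cons cats1 in Heq.
  case: (rcons_inj Heq) => Hq Hj'; subst q' j'.
  apply: (Hpar M); last by split.
  by move: HM; rewrite /= nth_err_lab.
- have h0 : 0 < size (gE H) by rewrite H1.
  case EH: (gE H) H1 H2 => [|x [|y r]] //= _ H2; rewrite /lab EH /= in H2.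
  have Htop : is_top (Prod H) [:: 0] by rewrite /= EH.
  have Hsub : subt (Prod H) [:: 0] = Some (Prim n i) by rewrite /= EH H2.
  have [q' [j' [M [Heq [HM [H4 Hj]]]]]] := Hlon _ Htop Hsub.
  case: q' Heq HM => [|x0 q''] /=.
    by move=> _ [HHM]; rewrite -HHM EH in H4.
  by case=> _; case: q''.
Qed.
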